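(* Let $(\mathcal M^-,\mathcal M^+)$ and $(\mathcal N^-,\mathcal N^+)$ be symbolic matrix bisystems satisfying FPCC. If they are properly strong shift equivalent in 1-step, then they are strong shift equivalent in 1-step.
   Context: Formal sums/specifications: $\mathfrak S_\Sigma$ = finite formal sums over a finite alphabet; products of matrices over $C$ and $D$ are over $C\cdot D=\{cd\}$; a specification is a bijection from a subset of one alphabet (possibly of two-letter words) onto a subset of another; $\mathcal A\overset{\phi}{\simeq}\mathcal A'$ means $\mathcal A'$ is obtained by replacing each symbol (resp. two-letter word) $a$ of $\mathcal A$ by $\phi(a)$; $\kappa(ab)=ba$. Symbolic matrix bisystem over $\Sigma^\pm$: $(\mathcal M^-_{l,l+1},\mathcal M^+_{l,l+1})_{l\ge0}$, $m(l)\times m(l+1)$ matrices over $\mathfrak S_{\Sigma^-},\mathfrak S_{\Sigma^+}$, no zero rows/columns, no symbol repeated within an entry or a column, $\mathcal M^-_{l,l+1}\mathcal M^+_{l+1,l+2}\overset{\kappa}{\simeq}\mathcal M^+_{l,l+1}\mathcal M^-_{l+1,l+2}$. FPCC: $m(0)=1$, $\Sigma^-=\Sigma^+$, and for each $l\ge1,j$ the words in $[\mathcal M^-_{0,1}\cdots\mathcal M^-_{l-1,l}](1,j)$ are the reversals of those in $[\mathcal M^+_{0,1}\cdots\mathcal M^+_{l-1,l}](1,j)$. Properly strong shift equivalent in 1-step ($\mathcal M$ over $\Sigma_\mathcal M$, $\mathcal N$ over $\Sigma_\mathcal N$, sizes $m(l),n(l)$): alphabets $C,D$, specifications $\varphi:\Sigma_\mathcal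 M\to C\cdot D$, $\phi:\Sigma_\mathcal N\to D\cdot C$, matrices $\mathcal P_l$ ($c(l)\times d(l+1)$ over $C$), $\mathcal Q_l$ ($d(l)\times c(l+1)$ over $D$), $\mathcal X_l$ over $D$ ($d(l)\times d(l+1)$, $l$ odd; $c(l)\times c(l+1)$, $l$ even), $\mathcal Y_l$ over $C$ ($c(l)\times c(l+1)$, $l$ odd; $d(l)\times d(l+1)$, $l$ even) with $\mathcal M^+_{l,l+1}\overset{\varphi}{\simeq}\mathcal P_{2l}\mathcal Q_{2l+1}$, $\mathcal N^+_{l,l+1}\overset{\phi}{\simeq}\mathcal Q_{2l}\mathcal P_{2l+1}$, $\mathcal M^-_{l,l+1}\overset{\kappa\varphi}{\simeq}\mathcal X_{2l}\mathcal Y_{2l+1}$, $\mathcal N^-_{l,l+1}\overset{\kappa\phi}{\simeq}\mathcal Y_{2l}\mathcal X_{2l+1}$, $\mathcal Y_{2l+1}\mathcal P_{2l+2}\overset{\kappa}{\simeq}\mathcal P_{2l+1}\mathcal Y_{2l+2}$, $\mathcal X_{2l+1}\mathcal Q_{2l+2}\overset{\kappa}{\simeq}\mathcal Q_{2l+1}\mathcal X_{2l+2}$, $\mathcal X_{2l}\mathcal P_{2l+1}\overset{\kappa}{\simeq}\mathcal P_{2l}\mathcal X_{2l+1}$, $\mathcal Y_{2l}\mathcal Q_{2l+1}\overset{\kappa}{\simeq}\mathcal Q_{2l}\mathcal Y_{2l+1}$ for all $l\ge0$. Strong shift equivalent in 1-step (for symbolic matrix bisystems $\mathcal M$ over $\Sigma^\pm_\mathcal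 M$, $\mathcal N$ over $\Sigma^\pm_\mathcal N$): there exist alphabets $C,D$, specifications $\varphi_1:\Sigma^-_\mathcal M\cdot\Sigma^+_\mathcal M\to C\cdot D$, $\varphi_2:\Sigma^-_\mathcal N\cdot\Sigma^+_\mathcal N\to D\cdot C$, $\phi^\pm_C:\Sigma^\pm_\mathcal M\cdot C\to C\cdot\Sigma^\pm_\mathcal N$, $\phi^\pm_D:\Sigma^\pm_\mathcal N\cdot D\to D\cdot\Sigma^\pm_\mathcal M$, and for each $l$ an $m(l)\times n(l+1)$ matrix $\mathcal H_l$ over $C$ and an $n(l)\times m(l+1)$ matrix $\mathcal K_l$ over $D$ with $\mathcal M^-_{l,l+1}\mathcal M^+_{l+1,l+2}\overset{\varphi_1}{\simeq}\mathcal H_l\mathcal K_{l+1}$, $\mathcal N^-_{l,l+1}\mathcal N^+_{l+1,l+2}\overset{\varphi_2}{\simeq}\mathcal K_l\mathcal H_{l+1}$, $\mathcal M^+_{l,l+1}\mathcal H_{l+1}\overset{\phi^+_C}{\simeq}\mathcal H_l\mathcal N^+_{l+1,l+2}$, $\mathcal N^+_{l,l+1}\mathcal K_{l+1}\overset{\phi^+_D}{\simeq}\mathcal K_l\mathcal M^+_{l+1,l+2}$, $\mathcal M^-_{l,l+1}\mathcal H_{l+1}\overset{\phi^-_C}{\simeq}\mathcal H_l\mathcal N^-_{l+1,l+2}$, $\mathcal N^-_{l,l+1}\mathcal K_{l+1}\overset{\phi^-_D}{\simeq}\mathcal K_l\mathcal M^-_{l+1,l+2}$. *)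

(* Defs.v *)
From HB Require Import structures.
From mathcomp Require Import all_boot.
Set Implicit Arguments. Unset Strict Implicit. Unset Printing Implicit Defensive.

(* A finite formal sum over a finite alphabet A (element of S_A):
   a coefficient (multiplicity) for each symbol. *)
Definition fsum (A : finType) := A -> nat.

(* A matrix over S_A, indexed by natural numbers; its dimensions are carried
   separately and only entries (i,j) with i < rows, j < cols are meaningful. *)
Definition mat (A : finType) := nat -> nat -> fsum A.

Definition mmul (A B : finType) (n : nat) (X : mat A) (Y : mat B) : mat (A * B)%type :=
  fun i k p => \sum_(j < n) X i j p.1 * Y j k p.2.

(* A specification: a bijection from a subset of A onto a subset of B,
   modelled as a partial injective map. *)
Definition is_spec (A B : finType) (f : A -> option B) : Prop :=
  forall a a' b, f a = Some b -> f a' = Some b -> a = a'.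

(* X (r x s over A)  ~~f~~  Y (r' x s' over B): Y has the same shape as X
   and is obtained from X by replacing each symbol a by f a (all symbols
   occurring in X lie in the domain of f). *)
Definition sim (A B : finType) (f : A -> option B)
  (r s : nat) (X : mat A) (r' s' : nat) (Y : mat B) : Prop :=
  r = r' /\ s = s' /\
  forall i j, i < r -> j < s ->
    (forall a, 0 < X i j a -> f a <> None) /\
    (forall b, Y i j b = \sum_(a | f a == Some b) X i j a).

Definition kappa (A B : finType) (p : (A * B)%type) : option (B * A)%type :=
  Some (p.2, p.1).

Definition kcomp (S A B : finType) (f : S -> option (A * B)%type) : S -> option (B * A)%type :=
  fun a => match f a with Some p => Some (p.2, p.1) | None => None end.

(* Symbolic matrix bisystem (M^-_{l,l+1}, M^+_{l,l+1})_l over Sigma^-, Sigma^+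
   with sizes m(l). *)
Definition symbolic (A : finType) (m : nat -> nat) (M : nat -> mat A) : Prop :=
  forall l,
    (forall i, i < m l -> exists j, j < m l.+1 /\ exists a, 0 < M l i j a) /\
    (forall j, j < m l.+1 -> exists i, i < m l /\ exists a, 0 < M l i j a) /\
    (* no symbol repeated within an entry or within a column *)
    (forall j a, j < m l.+1 -> \sum_(i < m l) M l i j a <= 1).

Definition is_bisystem (Sm Sp : finType) (m : nat -> nat)
  (Mm : nat -> mat Sm) (Mp : nat -> mat Sp) : Prop :=
  symbolic m Mm /\ symbolic m Mp /\
  forall l,
    sim (@kappa Sm Sp) (m l) (m l.+2) (mmul (m l.+1) (Mm l) (Mp l.+1))
                       (m l) (m l.+2) (mmul (m l.+1) (Mp l) (Mm l.+1)).

(* Formal sum of words in [M_{0,1} ... M_{l-1,l}](i,j). *)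
Fixpoint wprod (S : finType) (m : nat -> nat) (M : nat -> mat S)
  (l : nat) (i j : nat) (w : seq S) : nat :=
  match l with
  | 0 => ((w == [::]) && (i == j) : nat)
  | l'.+1 =>
      match rev w with
      | [::] => 0
      | a :: rw => \sum_(k < m l') wprod m M l' i k (rev rw) * M l' k j a
      end
  end.

(* FPCC (for a bisystem with Sigma^- = Sigma^+ = S); row index "1" is 0. *)
Definition FPCC (S : finType) (m : nat -> nat) (Mm Mp : nat -> mat S) : Prop :=
  m 0 = 1 /\
  forall l j (w : seq S), 1 <= l -> j < m l ->
    (0 < wprod m Mm l 0 j w) = (0 < wprod m Mp l 0 j (rev w)).

Definition pSSE1 (SM SN : finType)
  (m : nat -> nat) (Mm Mp : nat -> mat SM)
  (n : nat -> nat) (Nm Np : nat -> mat SN) : Prop :=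
  exists (C D : finType) (phi : SM -> option (C * D)%type)
         (psi : SN -> option (D * C)%type) (c d : nat -> nat)
         (P : nat -> mat C) (Q : nat -> mat D)
         (X : nat -> mat D) (Y : nat -> mat C),
    is_spec phi /\ is_spec psi /\
    forall l,
      sim phi (m l) (m l.+1) (Mp l)
          (c l.*2) (c l.*2.+2) (mmul (d l.*2.+1) (P l.*2) (Q l.*2.+1)) /\
      sim psi (n l) (n l.+1) (Np l)
          (d l.*2) (d l.*2.+2) (mmul (c l.*2.+1) (Q l.*2) (P l.*2.+1)) /\
      sim (kcomp phi) (m l) (m l.+1) (Mm l)
          (c l.*2) (c l.*2.+2) (mmul (c l.*2.+1) (X l.*2) (Y l.*2.+1)) /\
      sim (kcomp psi) (n l) (n l.+1) (Nm l)
          (d l.*2) (d l.*2.+2) (mmul (d l.*2.+1) (Y l.*2) (X l.*2.+1)) /\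
      sim (@kappa C C)
          (c l.*2.+1) (d l.*2.+3) (mmul (c l.*2.+2) (Y l.*2.+1) (P l.*2.+2))
          (c l.*2.+1) (d l.*2.+3) (mmul (d l.*2.+2) (P l.*2.+1) (Y l.*2.+2)) /\
      sim (@kappa D D)
          (d l.*2.+1) (c l.*2.+3) (mmul (d l.*2.+2) (X l.*2.+1) (Q l.*2.+2))
          (d l.*2.+1) (c l.*2.+3) (mmul (c l.*2.+2) (Q l.*2.+1) (X l.*2.+2)) /\
      sim (@kappa D C)
          (c l.*2) (d l.*2.+2) (mmul (c l.*2.+1) (X l.*2) (P l.*2.+1))
          (c l.*2) (d l.*2.+2) (mmul (d l.*2.+1) (P l.*2) (X l.*2.+1)) /\
      sim (@kappa C D)
          (d l.*2) (c l.*2.+2) (mmul (d l.*2.+1) (Y l.*2) (Q l.*2.+1))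
          (d l.*2) (c l.*2.+2) (mmul (c l.*2.+1) (Q l.*2) (Y l.*2.+1)).

Definition SSE1 (SMm SMp SNm SNp : finType)
  (m : nat -> nat) (Mm : nat -> mat SMm) (Mp : nat -> mat SMp)
  (n : nat -> nat) (Nm : nat -> mat SNm) (Np : nat -> mat SNp) : Prop :=
  exists (C D : finType)
         (phi1 : (SMm * SMp)%type -> option (C * D)%type)
         (phi2 : (SNm * SNp)%type -> option (D * C)%type)
         (phCp : (SMp * C)%type -> option (C * SNp)%type)
         (phCm : (SMm * C)%type -> option (C * SNm)%type)
         (phDp : (SNp * D)%type -> option (D * SMp)%type)
         (phDm : (SNm * D)%type -> option (D * SMm)%type)
         (H : nat -> mat C) (K : nat -> mat D),
    is_spec phi1 /\ is_spec phi2 /\ is_spec phCp /\ is_spec phCm /\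
    is_spec phDp /\ is_spec phDm /\
    forall l,
      sim phi1 (m l) (m l.+2) (mmul (m l.+1) (Mm l) (Mp l.+1))
               (m l) (m l.+2) (mmul (n l.+1) (H l) (K l.+1)) /\
      sim phi2 (n l) (n l.+2) (mmul (n l.+1) (Nm l) (Np l.+1))
               (n l) (n l.+2) (mmul (m l.+1) (K l) (H l.+1)) /\
      sim phCp (m l) (n l.+2) (mmul (m l.+1) (Mp l) (H l.+1))
               (m l) (n l.+2) (mmul (n l.+1) (H l) (Np l.+1)) /\
      sim phDp (n l) (m l.+2) (mmul (n l.+1) (Np l) (K l.+1))
               (n l) (m l.+2) (mmul (m l.+1) (K l) (Mp l.+1)) /\
      sim phCm (m l) (n l.+2) (mmul (m l.+1) (Mm l) (H l.+1))
               (m l) (n l.+2) (mmul (n l.+1) (H l) (Nm l.+1)) /\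
      sim phDm (n l) (m l.+2) (mmul (n l.+1) (Nm l) (K l.+1))
               (n l) (m l.+2) (mmul (m l.+1) (K l) (Mm l.+1)).

(* Main.v *)
Require Import Defs.
From HB Require Import structures.
From mathcomp Require Import all_boot.
Set Implicit Arguments. Unset Strict Implicit. Unset Printing Implicit Defensive.

Definition E4 (A B C D : finType) (n1 n2 n3 : nat) (MA : mat A) (MB : mat B)
  (MC : mat C) (MD : mat D) (i j : nat) (a : A) (b : B) (c : C) (d : D) : nat :=
  \sum_(k < n2) (\sum_(s < n1) MA i s a * MB s k b) * (\sum_(t < n3) MC k t c * MD t j d).

Lemma E4_alt (A B C D : finType) n1 n2 n3 (MA : mat A) (MB : mat B)
  (MC : mat C) (MD : mat D) i j a b c d :
  E4 n1 n2 n3 MA MB MC MD i j a b c d =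
  \sum_(s < n1) \sum_(t < n3) MA i s a * (\sum_(k < n2) MB s k b * MC k t c) * MD t j d.
Proof.
rewrite /E4.
transitivity (\sum_(k < n2) \sum_(s < n1) \sum_(t < n3)
   MA i s a * (MB s k b * MC k t c) * MD t j d).
  apply: eq_bigr => k _; rewrite big_distrl /=; apply: eq_bigr => s _.
  rewrite big_distrr /=; apply: eq_bigr => t _; by rewrite !mulnA.
rewrite exchange_big /=; apply: eq_bigr => s _.
rewrite exchange_big /=; apply: eq_bigr => t _.
by rewrite big_distrr big_distrl.
Qed.

Lemma E4_mid (A B C D : finType) n1 n2 n2' n3 (MA : mat A) (MB : mat B)
  (MC : mat C) (MD : mat D) (MB' : mat C) (MC' : mat B) i j a b c d :
  (forall s t, s < n1 -> t < n3 ->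
     \sum_(k < n2) MB s k b * MC k t c = \sum_(k < n2') MB' s k c * MC' k t b) ->
  E4 n1 n2 n3 MA MB MC MD i j a b c d = E4 n1 n2' n3 MA MB' MC' MD i j a c b d.
Proof.
move=> h; rewrite !E4_alt; apply: eq_bigr => s _; apply: eq_bigr => t _.
by rewrite h.
Qed.

Lemma E4_left (A B C D : finType) n1 n1' n2 n3 (MA : mat A) (MB : mat B)
  (MC : mat C) (MD : mat D) (MA' : mat B) (MB' : mat A) i j a b c d :
  (forall k, k < n2 ->
     \sum_(s < n1) MA i s a * MB s k b = \sum_(s < n1') MA' i s b * MB' s k a) ->
  E4 n1 n2 n3 MA MB MC MD i j a b c d = E4 n1' n2 n3 MA' MB' MC MD i j b a c d.
Proof. by move=> h; rewrite /E4; apply: eq_bigr => k _; rewrite h. Qed.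

Lemma E4_right (A B C D : finType) n1 n2 n3 n3' (MA : mat A) (MB : mat B)
  (MC : mat C) (MD : mat D) (MC' : mat D) (MD' : mat C) i j a b c d :
  (forall k, k < n2 ->
     \sum_(t < n3) MC k t c * MD t j d = \sum_(t < n3') MC' k t d * MD' t j c) ->
  E4 n1 n2 n3 MA MB MC MD i j a b c d = E4 n1 n2 n3' MA MB MC' MD' i j a b d c.
Proof. by move=> h; rewrite /E4; apply: eq_bigr => k _; rewrite h. Qed.

Lemma sim_kappa (A B : finType) r s r' s' n n' (X : mat A) (Y : mat B)
  (Y' : mat B) (X' : mat A) :
  sim (@kappa A B) r s (mmul n X Y) r' s' (mmul n' Y' X') ->
  forall i j a b, i < r -> j < s -> mmul n' Y' X' i j (b, a) = mmul n X Y i j (a, b).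
Proof.
case=> _ [_ H] i j a b hi hj; case: (H i j hi hj) => _ ->.
rewrite (big_pred1 (a, b)) // => -[x y] /=.
by apply/eqP/eqP => [[-> ->]|[-> ->]].
Qed.

Lemma sim_eq (A B : finType) (f : A -> option B) r s X r' s' Y i j b :
  sim f r s X r' s' Y -> i < r -> j < s ->
  Y i j b = \sum_(a | f a == Some b) X i j a.
Proof. by case=> _ [_ H] hi hj; case: (H i j hi hj) => _ ->. Qed.

Lemma sim_dom (A B : finType) (f : A -> option B) r s X r' s' Y i j a :
  sim f r s X r' s' Y -> i < r -> j < s -> f a = None -> X i j a = 0.
Proof.
case=> _ [_ H] hi hj ha; case: (posnP (X i j a)) => // h.
by case: (H i j hi hj) => /(_ a h).
Qed.

Lemma spec_sum1 (A B : finType) (f : A -> option B) (a : A) b (F : A -> nat) :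
  is_spec f -> f a = Some b -> \sum_(a' | f a' == Some b) F a' = F a.
Proof.
move=> hs ha; rewrite (big_pred1 a) // => a'; apply/eqP/eqP => [h|->] //.
exact: hs h ha.
Qed.

Lemma is_spec_kcomp (S A B : finType) (f : S -> option (A * B)) :
  is_spec f -> is_spec (kcomp f).
Proof.
move=> h a a' b; rewrite /kcomp.
case E: (f a) => [[x y]|] //; case E': (f a') => [[x' y']|] // <- [hy hx].
by subst; apply: h E E'.
Qed.

Definition fP (S1 S2 A1 A2 B1 B2 : finType) (g1 : S1 -> option (A1 * A2))
  (g2 : S2 -> option (B1 * B2)) (p : S1 * S2) : option ((A1 * B1) * (A2 * B2)) :=
  match g1 p.1, g2 p.2 with
  | Some e1, Some e2 => Some ((e1.1, e2.1), (e1.2, e2.2))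
  | _, _ => None
  end.

Lemma fP_spec (S1 S2 A1 A2 B1 B2 : finType) (g1 : S1 -> option (A1 * A2))
  (g2 : S2 -> option (B1 * B2)) :
  is_spec g1 -> is_spec g2 -> is_spec (fP g1 g2).
Proof.
move=> h1 h2 [a b] [a' b'] w; rewrite /fP /=.
case E1: (g1 a) => [[x1 x2]|] //; case E2: (g2 b) => [[y1 y2]|] //.
case E1': (g1 a') => [[x1' y1']|] //; case E2': (g2 b') => [[x2' y2']|] // <- [] ? ? ? ?.
subst; congr pair; [exact: h1 E1 E1' | exact: h2 E2 E2'].
Qed.

Lemma caseP (S1 S2 A1 A2 B1 B2 : finType) (g1 : S1 -> option (A1 * A2))
  (g2 : S2 -> option (B1 * B2))
  (r n s r1 n1 n2 s2 nH : nat) (M1 : mat S1) (M2 : mat S2) (A : mat (A1 * A2)%type)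
  (B : mat (B1 * B2)%type) (H : mat (A1 * B1)%type) (K : mat (A2 * B2)%type) :
  sim g1 r n M1 r1 n1 A -> sim g2 n s M2 n2 s2 B ->
  (forall i j e1 e2, i < r -> j < s ->
     \sum_(k < n) A i k e1 * B k j e2 = mmul nH H K i j ((e1.1, e2.1), (e1.2, e2.2))) ->
  sim (fP g1 g2) r s (mmul n M1 M2) r s (mmul nH H K).
Proof.
move=> S1h S2h core; split; first done; split; first done.
move=> i j hi hj; split.
  move=> [a b]; rewrite /fP /=.
  case E1: (g1 a) => [e1|]; last first.
    rewrite /mmul big1 // => k _; by rewrite (sim_dom S1h hi (ltn_ord k) E1).
  case E2: (g2 b) => [e2|] //.
  rewrite /mmul big1 // => k _; by rewrite (sim_dom S2h (ltn_ord k) hj E2) muln0.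
move=> [[x1 y1] [x2 y2]].
have := core i j (x1, x2) (y1, y2) hi hj; rewrite /= => <-.
transitivity (\sum_(k < n) \sum_(a | g1 a == Some (x1, x2))
   \sum_(b | g2 b == Some (y1, y2)) M1 i k a * M2 k j b).
  apply: eq_bigr => k _; rewrite (sim_eq _ S1h hi (ltn_ord k)).
  rewrite (sim_eq _ S2h (ltn_ord k) hj) big_distrl /=; apply: eq_bigr => a _.
  by rewrite big_distrr.
rewrite exchange_big /=.
under eq_bigr do rewrite exchange_big /=.
rewrite pair_big_dep /=; apply: eq_bigl => -[a b] /=.
rewrite /fP /=; case: (g1 a) => [[u1 u2]|]; case: (g2 b) => [[v1 v2]|] //=.
  by rewrite !(inj_eq (@Some_inj _)) !xpair_eqE andbACA.
by rewrite andbF.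
Qed.

Definition fC (S1 S2 E O U W : finType) (g1 : S1 -> option E) (g2 : S2 -> option O)
  (out : E -> U -> (W * O)%type) (p : (S1 * U)%type) : option (W * S2)%type :=
  match g1 p.1 with
  | Some e =>
      match [pick b | g2 b == Some (out e p.2).2] with
      | Some b => Some ((out e p.2).1, b)
      | None => None
      end
  | None => None
  end.

Section CaseC.
Variables (S1 S2 E O U W : finType) (g1 : S1 -> option E) (g2 : S2 -> option O)
  (out : E -> U -> (W * O)%type) (inv : W -> O -> (E * U)%type).
Hypothesis hinv : forall e u w o, out e u = (w, o) <-> (e, u) = inv w o.
Hypotheses (h1 : is_spec g1) (h2 : is_spec g2).

Lemma out_inj e u e' u' : out e u = out e' u' -> e = e' /\ u = u'.
Proof.
move=> h; case E1: (out e u) => [w o].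
have := E1; rewrite h => E2.
move/hinv: E1 => E1; move/hinv: E2; rewrite -E1; by case.
Qed.

Lemma fC_spec : is_spec (fC g1 g2 out).
Proof.
move=> [a u] [a' u'] [w b]; rewrite /fC /=.
case Ea: (g1 a) => [e|] //; case: pickP => [b1 /eqP Hb1|] //.
case E': (g1 a') => [e'|] //; case: pickP => [b2 /eqP Hb2|] // [hw hb] [hw' hb'].
subst b1 b2.
have eo : out e u = out e' u'.
  move: hw hw' Hb1 Hb2; case: (out e u) => w1 o1; case: (out e' u') => w2 o2 /=.
  by move=> -> -> -> [->].
case: (out_inj eo) => ee eu; subst e' u'.
by rewrite (h1 Ea E').
Qed.

Lemma fC_char w b o a u : g2 b = Some o ->
  (fC g1 g2 out (a, u) == Some (w, b)) =
  (g1 a == Some (inv w o).1) && (u == (inv w o).2).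
Proof.
move=> hb; rewrite /fC /=.
apply/eqP/andP.
  case Ea: (g1 a) => [e|] //; case: pickP => [b1 /eqP Hb1|] // [hw hb1].
  subst b1; move: Hb1; rewrite hb => -[ho].
  have: out e u = (w, o) by rewrite ho -hw; case: (out e u).
  by move/hinv => <-.
move=> [/eqP ha /eqP hu]; rewrite ha.
have : out (inv w o).1 (inv w o).2 = (w, o) by apply/hinv; case: (inv w o).
rewrite -hu => ->; case: pickP => [b1 /eqP Hb1|/(_ b)]; last by rewrite hb eqxx.
by rewrite (h2 Hb1 hb).
Qed.

Lemma fC_none w b a u : g2 b = None -> fC g1 g2 out (a, u) <> Some (w, b).
Proof.
move=> hb; rewrite /fC /=; case: (g1 a) => [e|] //; case: pickP => [b1 /eqP Hb1|] //.
by case=> _ Eb; move: Hb1; rewrite Eb hb.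
Qed.

Lemma caseC (r n1 s n2 r1 n1' n2' s' : nat) (M : mat S1) (A : mat E) (Hm : mat U)
  (Hp : mat W) (N : mat S2) (B : mat O) :
  sim g1 r n1 M r1 n1' A -> sim g2 n2 s N n2' s' B ->
  (forall i j e u, i < r -> j < s ->
     \sum_(k < n1) A i k e * Hm k j u =
     \sum_(k < n2) Hp i k (out e u).1 * B k j (out e u).2) ->
  sim (fC g1 g2 out) r s (mmul n1 M Hm) r s (mmul n2 Hp N).
Proof.
move=> SA SB core; split; first done; split; first done.
move=> i j hi hj; split.
  move=> [a u] /= pos; rewrite /fC /=.
  case Ea: (g1 a) => [e|]; last first.
    move: pos; rewrite /mmul big1 // => k _.
    by rewrite (sim_dom SA hi (ltn_ord k) Ea).
  case: pickP => [b _ //|nob].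
  have le1 : \sum_(k < n1) M i k a * Hm k j u <= \sum_(k < n1) A i k e * Hm k j u.
    apply: leq_sum => k _; apply: leq_mul => //.
    rewrite (sim_eq _ SA hi (ltn_ord k)) (bigD1 a) /=; last by rewrite Ea.
    exact: leq_addr.
  have z : \sum_(k < n2) Hp i k (out e u).1 * B k j (out e u).2 = 0.
    apply: big1 => k _.
    by rewrite (sim_eq _ SB (ltn_ord k) hj) big_pred0 ?muln0.
  by have := leq_trans pos le1; rewrite core // z.
move=> [w b].
case Eb: (g2 b) => [o|]; last first.
  rewrite big_pred0; last by move=> [a u]; apply/eqP; exact: fC_none.
  rewrite /mmul big1 // => k _; by rewrite (sim_dom SB (ltn_ord k) hj Eb) muln0.
have hout : out (inv w o).1 (inv w o).2 = (w, o) by apply/hinv; case: (inv w o).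
transitivity (\sum_(a | g1 a == Some (inv w o).1) \sum_(u | u == (inv w o).2)
                mmul n1 M Hm i j (a, u)); last first.
  rewrite pair_big_dep; apply: eq_bigl => -[a u] /=; by rewrite (fC_char _ _ _ Eb).
under eq_bigr do rewrite big_pred1_eq.
rewrite /mmul exchange_big /=.
transitivity (\sum_(k < n1) A i k (inv w o).1 * Hm k j (inv w o).2); last first.
  apply: eq_bigr => k _; rewrite (sim_eq _ SA hi (ltn_ord k)) big_distrl //.
rewrite core // hout /=; apply: eq_bigr => k _.
by rewrite (sim_eq _ SB (ltn_ord k) hj) (spec_sum1 _ h2 Eb).
Qed.

End CaseC.

Definition out1 (T1 T2 T3 T4 : finType) (e : (T1 * T2)%type) (u : (T3 * T4)%type) :
  ((T3 * T1) * (T2 * T4))%type := ((u.1, e.1), (e.2, u.2)).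
Definition inv1 (T1 T2 T3 T4 : finType) (w : (T3 * T1)%type) (o : (T2 * T4)%type) :
  ((T1 * T2) * (T3 * T4))%type := ((w.2, o.1), (w.1, o.2)).
Lemma hinv1 (T1 T2 T3 T4 : finType) e u w o :
  @out1 T1 T2 T3 T4 e u = (w, o) <-> (e, u) = inv1 w o.
Proof.
case: e u w o => [e1 e2] [u1 u2] [w1 w2] [o1 o2]; rewrite /out1 /inv1 /=.
by split => -[] -> -> -> ->.
Qed.
Definition out2 (T1 T2 T3 T4 : finType) (e : (T1 * T2)%type) (u : (T3 * T4)%type) :
  ((T1 * T4) * (T2 * T3))%type := ((e.1, u.2), (e.2, u.1)).
Definition inv2 (T1 T2 T3 T4 : finType) (w : (T1 * T4)%type) (o : (T2 * T3)%type) :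
  ((T1 * T2) * (T3 * T4))%type := ((w.1, o.1), (o.2, w.2)).
Lemma hinv2 (T1 T2 T3 T4 : finType) e u w o :
  @out2 T1 T2 T3 T4 e u = (w, o) <-> (e, u) = inv2 w o.
Proof.
case: e u w o => [e1 e2] [u1 u2] [w1 w2] [o1 o2]; rewrite /out2 /inv2 /=.
by split => -[] -> -> -> ->.
Qed.

Theorem proposition6p18 (SM SN : finType)
  (m : nat -> nat) (Mm Mp : nat -> mat SM)
  (n : nat -> nat) (Nm Np : nat -> mat SN) :
  is_bisystem m Mm Mp -> is_bisystem n Nm Np ->
  FPCC m Mm Mp -> FPCC n Nm Np ->
  pSSE1 m Mm Mp n Nm Np ->
  SSE1 m Mm Mp n Nm Np.
Proof.
move=> _ _ _ _ [C [D [phi [psi [c [d [P [Q [X [Y [sphi [spsi Hall]]]]]]]]]]]].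
have hm : forall k, m k = c k.*2 by move=> k; case: (Hall k) => [[-> _] _].
have hn : forall k, n k = d k.*2 by move=> k; case: (Hall k) => _ [[-> _] _].
pose H l := mmul (c l.*2.+1) (X l.*2) (P l.*2.+1).
pose K l := mmul (d l.*2.+1) (Y l.*2) (Q l.*2.+1).
exists (D * C)%type, (C * D)%type, (fP (kcomp phi) phi), (fP (kcomp psi) psi),
  (fC phi psi (@out1 _ _ _ _)), (fC (kcomp phi) (kcomp psi) (@out2 _ _ _ _)),
  (fC psi phi (@out1 _ _ _ _)), (fC (kcomp psi) (kcomp phi) (@out2 _ _ _ _)), H, K.
have sphi' := is_spec_kcomp sphi; have spsi' := is_spec_kcomp spsi.
split; first exact: fP_spec.
split; first exact: fP_spec.
split; first exact: (fC_spec (@hinv1 _ _ _ _) sphi).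
split; first exact: (fC_spec (@hinv2 _ _ _ _) sphi').
split; first exact: (fC_spec (@hinv1 _ _ _ _) spsi).
split; first exact: (fC_spec (@hinv2 _ _ _ _) spsi').
move=> l.
case: (Hall l) => hPQ [hQP [hXY [hYX [hYP [hXQ [hXP hYQ]]]]]].
case: (Hall l.+1) => hPQ' [hQP' [hXY' [hYX' [_ [_ [hXP' hYQ']]]]]].
rewrite !hm !hn !doubleS in hPQ hQP hXY hYX hPQ' hQP' hXY' hYX' hXP' hYQ' *.
split.
  apply: (caseP hXY hPQ') => i j [x y] [p q] hi hj /=.
  change (E4 (c l.*2.+1) (c l.*2.+2) (d l.*2.+3) (X l.*2) (Y l.*2.+1) (P l.*2.+2) (Q l.*2.+3) i j x y p q
        = E4 (c l.*2.+1) (d l.*2.+2) (d l.*2.+3) (X l.*2) (P l.*2.+1) (Y l.*2.+2) (Q l.*2.+3) i j x p y q).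
  apply: E4_mid => s t hs ht.
  exact: (esym (sim_kappa hYP _ _ hs ht)).
split.
  apply: (caseP hYX hQP') => i j [y x] [q p] hi hj /=.
  change (E4 (d l.*2.+1) (d l.*2.+2) (c l.*2.+3) (Y l.*2) (X l.*2.+1) (Q l.*2.+2) (P l.*2.+3) i j y x q p
        = E4 (d l.*2.+1) (c l.*2.+2) (c l.*2.+3) (Y l.*2) (Q l.*2.+1) (X l.*2.+2) (P l.*2.+3) i j y q x p).
  apply: E4_mid => s t hs ht.
  exact: (esym (sim_kappa hXQ _ _ hs ht)).
split.
  apply: (caseC (@hinv1 _ _ _ _) spsi hPQ hQP') => i j [p0 q0] [x p] hi hj /=.
  change (E4 (d l.*2.+1) (c l.*2.+2) (c l.*2.+3) (P l.*2) (Q l.*2.+1) (X l.*2.+2) (P l.*2.+3) i j p0 q0 x p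
        = E4 (c l.*2.+1) (d l.*2.+2) (c l.*2.+3) (X l.*2) (P l.*2.+1) (Q l.*2.+2) (P l.*2.+3) i j x p0 q0 p).
  transitivity (E4 (d l.*2.+1) (d l.*2.+2) (c l.*2.+3) (P l.*2) (X l.*2.+1) (Q l.*2.+2) (P l.*2.+3) i j p0 x q0 p).
    apply: E4_mid => s t hs ht.
    exact: (sim_kappa hXQ _ _ hs ht).
  apply: E4_left => k hk.
  exact: (sim_kappa hXP _ _ hi hk).
split.
  apply: (caseC (@hinv1 _ _ _ _) sphi hQP hPQ') => i j [q0 p0] [y q] hi hj /=.
  change (E4 (c l.*2.+1) (d l.*2.+2) (d l.*2.+3) (Q l.*2) (P l.*2.+1) (Y l.*2.+2) (Q l.*2.+3) i j q0 p0 y q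
        = E4 (d l.*2.+1) (c l.*2.+2) (d l.*2.+3) (Y l.*2) (Q l.*2.+1) (P l.*2.+2) (Q l.*2.+3) i j y q0 p0 q).
  transitivity (E4 (c l.*2.+1) (c l.*2.+2) (d l.*2.+3) (Q l.*2) (Y l.*2.+1) (P l.*2.+2) (Q l.*2.+3) i j q0 y p0 q).
    apply: E4_mid => s t hs ht.
    exact: (sim_kappa hYP _ _ hs ht).
  apply: E4_left => k hk.
  exact: (sim_kappa hYQ _ _ hi hk).
split.
  apply: (caseC (@hinv2 _ _ _ _) spsi' hXY hYX') => i j [x0 y0] [x p] hi hj /=.
  change (E4 (c l.*2.+1) (c l.*2.+2) (c l.*2.+3) (X l.*2) (Y l.*2.+1) (X l.*2.+2) (P l.*2.+3) i j x0 y0 x p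
        = E4 (c l.*2.+1) (d l.*2.+2) (d l.*2.+3) (X l.*2) (P l.*2.+1) (Y l.*2.+2) (X l.*2.+3) i j x0 p y0 x).
  transitivity (E4 (c l.*2.+1) (c l.*2.+2) (d l.*2.+3) (X l.*2) (Y l.*2.+1) (P l.*2.+2) (X l.*2.+3) i j x0 y0 p x).
    apply: E4_right => k hk.
    exact: (esym (sim_kappa hXP' _ _ hk hj)).
  apply: E4_mid => s t hs ht.
  exact: (esym (sim_kappa hYP _ _ hs ht)).
apply: (caseC (@hinv2 _ _ _ _) sphi' hYX hXY') => i j [y0 x0] [y q] hi hj /=.
change (E4 (d l.*2.+1) (d l.*2.+2) (d l.*2.+3) (Y l.*2) (X l.*2.+1) (Y l.*2.+2) (Q l.*2.+3) i j y0 x0 y q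
      = E4 (d l.*2.+1) (c l.*2.+2) (c l.*2.+3) (Y l.*2) (Q l.*2.+1) (X l.*2.+2) (Y l.*2.+3) i j y0 q x0 y).
transitivity (E4 (d l.*2.+1) (d l.*2.+2) (c l.*2.+3) (Y l.*2) (X l.*2.+1) (Q l.*2.+2) (Y l.*2.+3) i j y0 x0 q y).
  apply: E4_right => k hk.
  exact: (esym (sim_kappa hYQ' _ _ hk hj)).
apply: E4_mid => s t hs ht.
exact: (esym (sim_kappa hXQ _ _ hs ht)).
Qed.
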